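(* Let $\sigma$ be an implicit signature, $\mathsf V$ a pseudovariety of finite semigroups and $X$ a finite alphabet. (i) If $L\subseteq\Omega^\sigma_X\mathsf V$ satisfies $\overline{L^+}=\langle L\rangle_\sigma$, then also $\overline{L^+}=\langle\overline L\rangle_\sigma$. (ii) If $\mathsf V$ is a LERF pseudovariety of groups and $\sigma=\kappa$, then $\overline{L^+}=\langle L\rangle_\kappa$ for every rational subset $L$ of $\Omega^\kappa_X\mathsf V$. Here closures are taken in $\Omega^\sigma_X\mathsf V$.
   Context: $\overline{\Omega}_X\mathsf V$ is the free pro-$\mathsf V$ semigroup on $X$; an implicit signature is a set of implicit operations of finite arity containing multiplication; $\Omega^\sigma_X\mathsf V$ is the subalgebra of $\overline{\Omega}_X\mathsf V$ generated by $X$ under the operations of $\sigma$, with the topology induced from $\overline{\Omega}_X\mathsf V$; $\langle U\rangle_\sigma$ is the $\sigma$-subalgebra generated by $U$. $\kappa$ consists of multiplication and the $(\omega-1)$-power; for a pseudovariety of groups $\mathsf H$, $\Omega^\kappa_X\mathsf H$ is a group in which $x^{\omega-1}$ is the inverse of $x$. A pseudovariety of groups $\mathsf H$ is LERF if for every finite alphabet $X$, every finitely generated subgroup of the relatively free group $\Omega^\kappa_X\mathsf H$ is closed (in its pro-$\mathsf H$ topology, induced from $\overline{\Omega}_X\mathsf H$). *)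

(* Defs.v *)
From mathcomp Require Import all_boot.
From Stdlib Require Import FunctionalExtensionality.

Set Implicit Arguments.
Unset Strict Implicit.
Unset Printing Implicit Defensive.

(* Finite (nonempty) semigroups, coded on carriers 'I_n.+1.           *)
(* Every finite semigroup is isomorphic to such a code; pseudovarieties *)
(* below are required to be closed under isomorphism (via sub/quot).  *)
Record FinSg := {
  sg_n : nat;
  sg_mul : 'I_sg_n.+1 -> 'I_sg_n.+1 -> 'I_sg_n.+1;
  sg_assoc : associative sg_mul }.

Definition car (S : FinSg) : Type := 'I_(sg_n S).+1.
Definition smul (S : FinSg) : car S -> car S -> car S := @sg_mul S.

Definition is_hom (S T : FinSg) (f : car S -> car T) : Prop :=
  forall x y, f (smul x y) = smul (f x) (f y).

Definition triv_mul (x y : 'I_1) : 'I_1 := x.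
Lemma triv_assoc : associative triv_mul. Proof. by []. Qed.
Definition trivSg : FinSg := @Build_FinSg 0 triv_mul triv_assoc.

(* pseudovariety of finite semigroups: contains the trivial semigroup
   (empty product), closed under subsemigroups, homomorphic images and
   binary direct products (all up to isomorphism). *)
Definition pseudovariety (V : FinSg -> Prop) : Prop :=
  [/\ V trivSg,
      (forall (S T : FinSg) (f : car S -> car T),
          is_hom f -> injective f -> V T -> V S),
      (forall (S T : FinSg) (f : car S -> car T),
          is_hom f -> (forall y, exists x, f x = y) -> V S -> V T) &
      (forall (S T U : FinSg) (p : car U -> car S) (q : car U -> car T),
          is_hom p -> is_hom q ->
          (forall s t, exists u, p u = s /\ q u = t) ->
          (forall u u', p u = p u' -> q u = q u' -> u = u') ->
          V S -> V T -> V U)].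

Definition is_group (S : FinSg) : Prop :=
  exists e : car S, (forall x, smul e x = x /\ smul x e = x) /\
    (forall x, exists y, smul x y = e /\ smul y x = e).

Definition group_pseudovariety (V : FinSg -> Prop) : Prop :=
  pseudovariety V /\ forall S, V S -> is_group S.

Record IOp (n : nat) := {
  iop : forall S : FinSg, ('I_n -> car S) -> car S;
  iop_nat : forall (S T : FinSg) (f : car S -> car T), is_hom f ->
      forall a, f (iop a) = iop (fun i => f (a i)) }.
Arguments iop {n} i S a.

Definition is_mul_op n (o : IOp n) : Prop :=
  n = 2 /\ forall (S : FinSg) (x y : car S),
    iop o S (fun i : 'I_n => nth x [:: x; y] i) = smul x y.

(* x^(k+1) *)
Fixpoint spow (S : FinSg) (x : car S) (k : nat) : car S :=
  if k is k'.+1 then smul x (spow x k') else x.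

(* x^(omega-1) = x^(2N-1) with N = |S|! (so x^N = x^omega) *)
Definition omega_m1 (S : FinSg) (x : car S) : car S :=
  spow x (2 * (sg_n S).+1`! - 2).

Definition is_omega_m1_op n (o : IOp n) : Prop :=
  n = 1 /\ forall (S : FinSg) (x : car S), iop o S (fun _ => x) = omega_m1 x.

Definition implicit_signature (sigma : forall n, IOp n -> Prop) : Prop :=
  exists n (o : IOp n), sigma n o /\ is_mul_op o.

Definition kappa : forall n, IOp n -> Prop :=
  fun n o => is_mul_op o \/ is_omega_m1_op o.

(* The free pro-V semigroup on X, as the X-ary implicit operations on V: *)
(* natural families w_S : S^X -> S, S in V.                           *)
Record PV (V : FinSg -> Prop) (X : Type) := {
  ev : forall S : FinSg, V S -> (X -> car S) -> car S;
  ev_nat : forall (S T : FinSg) (hS : V S) (hT : V T) (f : car S -> car T),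
      is_hom f -> forall phi, f (ev hS phi) = ev hT (fun x => f (phi x)) }.
Arguments ev {V X} p {S} hS phi.

Section ProV.
Variables (V : FinSg -> Prop) (X : Type).

Definition pv_gen (x : X) : PV V X.
Proof.
refine (@Build_PV V X (fun S _ phi => phi x) _).
by [].
Defined.

Definition pv_mul (u v : PV V X) : PV V X.
Proof.
refine (@Build_PV V X (fun S hS phi => smul (ev u hS phi) (ev v hS phi)) _).
move=> S T hS hT f hf phi; by rewrite (hf _ _) (ev_nat u hS hT hf) (ev_nat v hS hT hf).
Defined.

Definition pv_op n (o : IOp n) (w : 'I_n -> PV V X) : PV V X.
Proof.
refine (@Build_PV V X (fun S hS phi => iop o S (fun i => ev (w i) hS phi)) _).
move=> S T hS hT f hf phi; rewrite (iop_nat o hf); apply: f_equal.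
by apply: functional_extensionality => i; rewrite (ev_nat (w i) hS hT hf).
Defined.

Inductive OmegaS (sigma : forall n, IOp n -> Prop) : PV V X -> Prop :=
  | OS_gen x : OmegaS sigma (pv_gen x)
  | OS_op n (o : IOp n) (w : 'I_n -> PV V X) :
      sigma n o -> (forall i, OmegaS sigma (w i)) -> OmegaS sigma (pv_op o w).

Inductive genS (sigma : forall n, IOp n -> Prop) (U : PV V X -> Prop)
    : PV V X -> Prop :=
  | GS_base w : U w -> genS sigma U w
  | GS_op n (o : IOp n) (w : 'I_n -> PV V X) :
      sigma n o -> (forall i, genS sigma U (w i)) -> genS sigma U (pv_op o w).

Inductive splus (L : PV V X -> Prop) : PV V X -> Prop :=
  | SP_base w : L w -> splus L w
  | SP_mul u v : splus L u -> splus L v -> splus L (pv_mul u v).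

(* points (S, phi) with S in V: each gives the continuous projection
   w |-> w_S(phi) onto the discrete finite semigroup S *)
Record VPt := { vS : FinSg; vV : V vS; vphi : X -> car vS }.

(* closure of A inside the subspace Omega^sigma_X V, for the pro-V
   topology (initial topology of the projections w |-> w_S(phi)):
   every basic neighbourhood (finite intersection) of w meets A *)
Definition clos (sigma : forall n, IOp n -> Prop) (A : PV V X -> Prop)
    (w : PV V X) : Prop :=
  OmegaS sigma w /\
  forall (k : nat) (p : 'I_k -> VPt),
    exists a, A a /\ OmegaS sigma a /\
      forall i, ev a (vV (p i)) (vphi (p i)) = ev w (vV (p i)) (vphi (p i)).

Inductive rationalK : (PV V X -> Prop) -> Prop :=
  | RK_empty : rationalK (fun _ => False)
  | RK_single a : OmegaS kappa a -> rationalK (fun w => w = a)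
  | RK_union A B : rationalK A -> rationalK B -> rationalK (fun w => A w \/ B w)
  | RK_prod A B : rationalK A -> rationalK B ->
      rationalK (fun w => exists u v, A u /\ B v /\ w = pv_mul u v)
  | RK_plus A : rationalK A -> rationalK (splus A)
  | RK_ext A B : rationalK A -> (forall w, A w <-> B w) -> rationalK B.

End ProV.

Definition set_eq (T : Type) (A B : T -> Prop) : Prop := forall w, A w <-> B w.

(* subgroup of the group Omega^kappa_X V generated by F: the kappa-subalgebra
   generated by F together with the identity (the idempotent of
   Omega^kappa_X V); in a group kappa = {product, inverse}. *)
Definition fg_subgroup (V : FinSg -> Prop) (X : Type) (k : nat)
    (F : 'I_k -> PV V X) : PV V X -> Prop :=
  genS kappa (fun w => (exists i, w = F i) \/
                       (OmegaS kappa w /\ pv_mul w w = w)).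

Definition LERF (V : FinSg -> Prop) : Prop :=
  forall (X : finType) (k : nat) (F : 'I_k -> PV V X),
    (forall i, OmegaS kappa (F i)) ->
    forall w, clos kappa (fg_subgroup F) w -> fg_subgroup F w.

(* Main.v *)
Require Import Defs.
From mathcomp Require Import all_boot zify.
From Stdlib Require Import FunctionalExtensionality ProofIrrelevance Classical.
Set Implicit Arguments. Unset Strict Implicit.

Lemma smulA (S : FinSg) (x y z : car S) : smul x (smul y z) = smul (smul x y) z.
Proof. exact: (@sg_assoc S). Qed.

Lemma spow_add S (x : car S) a b : smul (spow x a) (spow x b) = spow x (a + b).+1.
Proof.
elim: a => [|a IH]; first by rewrite add0n.
by rewrite /= -smulA IH.
Qed.

Lemma spow_hom S T (f : car S -> car T) : is_hom f -> forall x k,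
  f (spow x k) = spow (f x) k.
Proof. move=> hf x; elim=> [|k IH] //=; by rewrite hf IH. Qed.

Lemma spow_period S (x : car S) : exists i p, 0 < p /\ p <= (sg_n S).+1 /\
  i <= sg_n S /\ forall k, i <= k -> spow x (k + p) = spow x k.
Proof.
pose g : 'I_(sg_n S).+2 -> 'I_(sg_n S).+1 := fun i => spow x i.
have : ~~ injectiveb g.
  apply/negP => /injectiveP inj; have := leq_card g inj; rewrite !card_ord; lia.
case/injectivePn => i [j] nij gij.
have [i0 [j0 [lt0 [le0 eq0]]]] : exists i0 j0 : nat, i0 < j0 /\ j0 <= (sg_n S).+1 /\
   spow x i0 = spow x j0.
  case: (ltngtP i j) => h.
  - exists i, j; split => //; split => //; have := ltn_ord j; lia.
  - exists j, i; split => //; split => //; have := ltn_ord i; lia.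
  - by move: nij; rewrite (val_inj h) eqxx.
exists i0, (j0 - i0); split; first lia; split; first lia; split; first lia.
move=> k hk; have -> : k = i0 + (k - i0) by lia.
elim: (k - i0) => [|m IH]; first by rewrite addn0 subnKC // ltnW.
by rewrite addnS addSn /= IH.
Qed.

Lemma spow_fact S (x : car S) k t : sg_n S <= k ->
  spow x (k + t * (sg_n S).+1`!) = spow x k.
Proof.
case: (spow_period x) => i [p [p0 [pn [iN Hp]]]] hk.
have : p %| (sg_n S).+1`! by apply: dvdn_fact; rewrite p0 pn.
case/dvdnP => c ->.
elim: t => [|t IH]; first by rewrite mul0n addn0.
have gen : forall m q, i <= q -> spow x (q + m * p) = spow x q.
  move=> m q hq; elim: m => [|m IHm]; first by rewrite mul0n addn0.
  by rewrite mulSnr addnA Hp ?IHm //; lia.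
rewrite mulSnr addnA gen; last lia. exact: IH.
Qed.

Lemma fact_big (n : nat) : exists a, (n.+1)`! = a.+1 /\ n <= a.
Proof.
exists (n.+1)`!.-1; have := fact_geq n.+1; have := fact_gt0 n.+1; lia.
Qed.

Lemma om_nat (S T : FinSg) (f : car S -> car T) : is_hom f ->
  forall x, f (omega_m1 x) = omega_m1 (f x).
Proof.
move=> hf x; rewrite /omega_m1 spow_hom //.
have PS : forall j t, sg_n S <= j -> spow (f x) (j + t * (sg_n S).+1`!) = spow (f x) j.
  by move=> j t hj; rewrite -!spow_hom // spow_fact.
have PT : forall j t, sg_n T <= j -> spow (f x) (j + t * (sg_n T).+1`!) = spow (f x) j.
  by move=> j t hj; rewrite spow_fact.
have [a [Ea la]] := fact_big (sg_n S).
have [b [Eb lb]] := fact_big (sg_n T).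
rewrite Ea Eb -(PS _ (2 * b)); last lia.
rewrite -[in RHS](PT _ (2 * a)); last lia.
rewrite Ea Eb; congr spow; nia.
Qed.

Definition mulOp : IOp 2.
Proof.
refine (@Build_IOp 2 (fun S a => smul (a ord0) (a (@Ordinal 2 1 isT))) _).
by move=> S T f hf a; rewrite hf.
Defined.

Definition invOp : IOp 1.
Proof.
refine (@Build_IOp 1 (fun S a => omega_m1 (a ord0)) _).
by move=> S T f hf a; rewrite om_nat.
Defined.

Lemma mulOp_k : kappa mulOp.
Proof. by left; split. Qed.

Lemma invOp_k : kappa invOp.
Proof. by right; split. Qed.

Lemma kappa_shape n (o : IOp n) : kappa o ->
  (exists i0 i1 : 'I_n, forall S a, iop o S a = smul (a i0) (a i1)) \/
  (exists i0 : 'I_n, forall S a, iop o S a = omega_m1 (a i0)).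
Proof.
case=> [[En Hm]|[En Hm]]; subst n.
- left; exists ord0, (@Ordinal 2 1 isT) => S a.
  rewrite -Hm; congr (iop o S); apply: functional_extensionality => -[[|[|i]] Hi] //=;
  by congr a; apply: val_inj.
- right; exists ord0 => S a; rewrite -Hm; congr (iop o S).
  by apply: functional_extensionality => -[[|i] Hi] //=; congr a; apply: val_inj.
Qed.

Definition gid (S : FinSg) : car S := smul (omega_m1 (ord0 : car S)) ord0.

Lemma grp_facts S : is_group S ->
  (forall x : car S, smul (gid S) x = x /\ smul x (gid S) = x) /\
  (forall x : car S, smul (omega_m1 x) x = gid S /\ smul x (omega_m1 x) = gid S).
Proof.
case=> e [He Hinv].
have lcan : forall a b c : car S, smul a b = smul a c -> b = c.
  move=> a b c h; case: (Hinv a) => y [_ hya].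
  by rewrite -(proj1 (He b)) -(proj1 (He c)) -hya -!smulA h.
have [a [Ea la]] := fact_big (sg_n S).
have pN : forall x : car S, spow x a = e.
  move=> x; apply: (@lcan (spow x (sg_n S))).
  rewrite (proj2 (He _)) spow_add.
  have := spow_fact x 1 (leqnn (sg_n S)); rewrite Ea mul1n => h.
  by rewrite -[in RHS]h addnS.
have om : forall x : car S, smul (omega_m1 x) x = e /\ smul x (omega_m1 x) = e.
  move=> x; rewrite /omega_m1 Ea.
  have -> : 2 * a.+1 - 2 = a + a by lia.
  have h2 : spow x (a + a).+1 = e by rewrite -spow_add !pN (proj1 (He e)).
  split; last by rewrite /= in h2.
  have -> : x = spow x 0 by [].
  by rewrite spow_add addn0.
have ge : gid S = e by rewrite /gid (proj1 (om _)).
by rewrite ge; split.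
Qed.

Section PVG.
Variables (V : FinSg -> Prop) (X : Type).

Lemma pv_ext (u v : PV V X) :
  (forall S (hS : V S) phi, ev u hS phi = ev v hS phi) -> u = v.
Proof.
case: u => eu nu; case: v => ev' nv /= h.
have E : eu = ev'.
  apply: functional_extensionality_dep => S; apply: functional_extensionality_dep => hS.
  by apply: functional_extensionality => phi; apply: h.
subst ev'; f_equal; apply: proof_irrelevance.
Qed.

Definition pv_inv (u : PV V X) : PV V X.
Proof.
refine (@Build_PV V X (fun S hS phi => omega_m1 (ev u hS phi)) _).
by move=> S T hS hT f hf phi; rewrite om_nat // (ev_nat u hS hT hf).
Defined.

Hypothesis HG : forall S, V S -> is_group S.

Definition pv_e : PV V X.
Proof.
refine (@Build_PV V X (fun S hS phi => gid S) _).
move=> S T hS hT f hf phi; rewrite /gid hf om_nat //.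
exact: (proj1 ((proj2 (grp_facts (HG hT))) _)).
Defined.

Local Notation "u ** v" := (pv_mul u v) (at level 40, left associativity).

Lemma pv_mulA (u v w : PV V X) : u ** (v ** w) = u ** v ** w.
Proof. by apply: pv_ext => S hS phi /=; rewrite smulA. Qed.

Lemma pv_1mul (u : PV V X) : pv_e ** u = u.
Proof. by apply: pv_ext => S hS phi /=; rewrite (proj1 ((proj1 (grp_facts (HG hS))) _)). Qed.

Lemma pv_mul1 (u : PV V X) : u ** pv_e = u.
Proof. by apply: pv_ext => S hS phi /=; rewrite (proj2 ((proj1 (grp_facts (HG hS))) _)). Qed.

Lemma pv_Vmul (u : PV V X) : pv_inv u ** u = pv_e.
Proof. by apply: pv_ext => S hS phi /=; rewrite (proj1 ((proj2 (grp_facts (HG hS))) _)). Qed.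

Lemma pv_mulV (u : PV V X) : u ** pv_inv u = pv_e.
Proof. by apply: pv_ext => S hS phi /=; rewrite (proj2 ((proj2 (grp_facts (HG hS))) _)). Qed.

Lemma pv_inv_uniq (a b : PV V X) : a ** b = pv_e -> b = pv_inv a.
Proof.
move=> h; by rewrite -(pv_1mul b) -(pv_Vmul a) -pv_mulA h pv_mul1.
Qed.

Lemma pv_invK (u : PV V X) : pv_inv (pv_inv u) = u.
Proof. by apply/esym/pv_inv_uniq; rewrite pv_Vmul. Qed.

Lemma pv_invM (u v : PV V X) : pv_inv (u ** v) = pv_inv v ** pv_inv u.
Proof.
apply/esym/pv_inv_uniq.
by rewrite pv_mulA -(pv_mulA u) pv_mulV pv_mul1 pv_mulV.
Qed.

Lemma pv_inv_e : pv_inv pv_e = pv_e.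
Proof. by apply/esym/pv_inv_uniq; rewrite pv_mul1. Qed.

Lemma pv_idem (u : PV V X) : u ** u = u -> u = pv_e.
Proof.
by move=> h; rewrite -(pv_Vmul u) -{3}h pv_mulA pv_Vmul pv_1mul.
Qed.

Lemma pv_cancel (a u : PV V X) : a ** (pv_inv a ** u) = u.
Proof. by rewrite pv_mulA pv_mulV pv_1mul. Qed.

Lemma pv_cancel' (a u : PV V X) : pv_inv a ** (a ** u) = u.
Proof. by rewrite pv_mulA pv_Vmul pv_1mul. Qed.

End PVG.

Section Main2.
Variables (V : FinSg -> Prop) (X : Type).
Local Notation PVX := (PV V X).
Local Notation "u ** v" := (pv_mul u v) (at level 40, left associativity).

Definition kclosed (Q : PVX -> Prop) := forall n (o : IOp n) (w : 'I_n -> PVX),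
  kappa o -> (forall i, Q (w i)) -> Q (pv_op o w).

Lemma kclosed_mul Q : kclosed Q -> forall u v, Q u -> Q v -> Q (u ** v).
Proof.
move=> H u v hu hv.
have -> : u ** v = pv_op mulOp (fun i => nth u [:: u; v] i) by apply: pv_ext.
apply: H; first exact: mulOp_k.
by case=> [[|[|i]] Hi].
Qed.

Lemma kclosed_inv Q : kclosed Q -> forall u, Q u -> Q (pv_inv u).
Proof.
move=> H u hu.
have -> : pv_inv u = pv_op invOp (fun _ => u) by apply: pv_ext.
by apply: H => //; exact: invOp_k.
Qed.

Lemma kclosed_Omega : kclosed (OmegaS kappa).
Proof. move=> n o w ko hw; exact: OS_op. Qed.

Lemma kclosed_genS P : kclosed (genS kappa P).
Proof. move=> n o w ko hw; exact: GS_op. Qed.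

Lemma genS_sub (P Q : PVX -> Prop) : (forall w, P w -> genS kappa Q w) ->
  forall w, genS kappa P w -> genS kappa Q w.
Proof.
move=> H w; elim=> [u hu|n o u ko _ IH]; first exact: H.
exact: GS_op.
Qed.

Fixpoint pv_spow (b : PVX) (k : nat) : PVX :=
  if k is k'.+1 then b ** pv_spow b k' else b.

Lemma ev_spow b k S (hS : V S) phi : ev (pv_spow b k) hS phi = spow (ev b hS phi) k.
Proof. by elim: k => [|k IH] //=; rewrite IH. Qed.

Lemma splus_spow (L : PVX -> Prop) b k : splus L b -> splus L (pv_spow b k).
Proof. move=> hb; elim: k => [|k IH] //=; exact: SP_mul. Qed.

Lemma omega_spow b k : OmegaS kappa b -> OmegaS kappa (pv_spow b k).
Proof.
move=> hb; elim: k => [|k IH] //=; exact: (kclosed_mul kclosed_Omega).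
Qed.

Lemma splus_omega (L : PVX -> Prop) : (forall w, L w -> OmegaS kappa w) ->
  forall w, splus L w -> OmegaS kappa w.
Proof.
move=> hL w; elim=> [u /hL //|u v _ hu _ hv]; exact: (kclosed_mul kclosed_Omega).
Qed.

Lemma rational_omega (L : PVX -> Prop) : rationalK L -> forall w, L w -> OmegaS kappa w.
Proof.
elim=> [|a ha|A B _ hA _ hB|A B _ hA _ hB|A _ hA|A B _ hA hAB] w //=.
- by move=> ->.
- by case=> [/hA|/hB].
- case=> u [v [/hA hu [/hB hv ->]]]; exact: (kclosed_mul kclosed_Omega).
- exact: splus_omega.
- by move/hAB/hA.
Qed.

Lemma prod_gt0 k (p : 'I_k -> VPt V X) :
  exists c, \prod_(i < k) (sg_n (vS (p i))).+1`! = c.+1.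
Proof.
exists (\prod_(i < k) (sg_n (vS (p i))).+1`!).-1; rewrite prednK //.
by apply: prodn_gt0 => i; exact: fact_gt0.
Qed.

Lemma dvd_prod k (p : 'I_k -> VPt V X) i :
  (sg_n (vS (p i))).+1`! %| \prod_(i < k) (sg_n (vS (p i))).+1`!.
Proof. by rewrite (bigD1 i) //= dvdn_mulr. Qed.

Lemma genS_clos (L : PVX -> Prop) : (forall w, L w -> OmegaS kappa w) ->
  forall w, genS kappa L w -> clos kappa (splus L) w.
Proof.
move=> hL w; elim=> [u hu|n o u ko _ IH].
  split; first exact: hL.
  by move=> k p; exists u; split; [exact: SP_base|split; [exact: hL|]].
split; first by apply: OS_op => // i; case: (IH i).
move=> k p; case: (kappa_shape ko) => [[i0 [i1 Hs]]|[i0 Hs]].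
- case: (proj2 (IH i0) k p) => a0 [sa0 [oa0 ea0]].
  case: (proj2 (IH i1) k p) => a1 [sa1 [oa1 ea1]].
  exists (a0 ** a1); split; first exact: SP_mul.
  split; first exact: (kclosed_mul kclosed_Omega).
  by move=> i /=; rewrite Hs ea0 ea1.
- case: (proj2 (IH i0) k p) => b [sb [ob eb]].
  have [c Ec] := prod_gt0 p.
  exists (pv_spow b (2 * c)); split; first exact: splus_spow.
  split; first exact: omega_spow.
  move=> i /=; rewrite Hs ev_spow eb /omega_m1.
  have := dvd_prod p i; rewrite Ec; case/dvdnP => m Em.
  have [a' [Ea la]] := fact_big (sg_n (vS (p i))).
  move: Em; rewrite Ea; case: m => [|m'] //= Em.
  have -> : 2 * c = 2 * a' + (2 * m') * (sg_n (vS (p i))).+1`!.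
    rewrite Ea; nia.
  by rewrite spow_fact; [congr spow; lia| lia].
Qed.
End Main2.

Section Main3.
Variables (V : FinSg -> Prop) (X : Type).
Hypothesis HG : forall S, V S -> is_group S.
Local Notation PVX := (PV V X).
Local Notation "u ** v" := (pv_mul u v) (at level 40, left associativity).
Local Notation inv := (@pv_inv V X).
Local Notation e := (@pv_e V X HG).

Inductive SG (P : PVX -> Prop) : PVX -> Prop :=
  | SG_base w : P w -> SG P w
  | SG_e : SG P e
  | SG_mul u v : SG P u -> SG P v -> SG P (u ** v)
  | SG_inv u : SG P u -> SG P (inv u).

Lemma SG_sub (P Q : PVX -> Prop) : (forall w, P w -> SG Q w) ->
  forall w, SG P w -> SG Q w.
Proof.
move=> H w; elim=> {w} [u /H //| |u v _ hu _ hv|u _ hu].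
- exact: SG_e.
- exact: SG_mul.
- exact: SG_inv.
Qed.

Lemma SG_mono (P Q : PVX -> Prop) : (forall w, P w -> Q w) ->
  forall w, SG P w -> SG Q w.
Proof. move=> H; apply: SG_sub => w /H; exact: SG_base. Qed.

Lemma SG_in (P Q : PVX -> Prop) : kclosed Q -> Q e ->
  (forall w, P w -> Q w) -> forall w, SG P w -> Q w.
Proof.
move=> kQ Qe H w; elim=> {w} [u /H //|//|u v _ hu _ hv|u _ hu].
- exact: kclosed_mul.
- exact: kclosed_inv.
Qed.

Lemma mulVK (u b : PVX) : u ** inv b ** b = u.
Proof. by rewrite -pv_mulA pv_Vmul pv_mul1. Qed.
Lemma mulKV (u b : PVX) : u ** b ** inv b = u.
Proof. by rewrite -pv_mulA pv_mulV pv_mul1. Qed.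

Lemma split_mid (x y m : PVX) : inv x ** y = (inv x ** m) ** (inv m ** y).
Proof. by rewrite !pv_mulA mulKV. Qed.

Definition conj (c u : PVX) := inv c ** u ** c.

Lemma SG_conj (P : PVX -> Prop) c u : SG P u ->
  SG (fun w => exists v, P v /\ w = conj c v) (conj c u).
Proof.
elim=> {u} [u hu| |u v _ hu _ hv|u _ hu].
- by apply: SG_base; exists u.
- by rewrite /conj pv_mul1 pv_Vmul; exact: SG_e.
- have -> : conj c (u ** v) = conj c u ** conj c v.
    by rewrite /conj !pv_mulA mulKV.
  exact: SG_mul.
- have -> : conj c (inv u) = inv (conj c u).
    by rewrite /conj !(pv_invM HG) (pv_invK HG) pv_mulA.
  exact: SG_inv.
Qed.

Definition DD (A : PVX -> Prop) : PVX -> Prop :=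
  fun w => exists x y, A x /\ A y /\ w = inv x ** y.

Definition InF (F : seq PVX) : PVX -> Prop := fun w => List.In w F.

Definition Invar (A : PVX -> Prop) : Prop :=
  exists F : seq PVX, (forall f, InF F f -> SG (DD A) f) /\
    (forall x y, A x -> A y -> SG (InF F) (inv x ** y)).

Lemma DD_mono (A B : PVX -> Prop) : (forall w, A w -> B w) ->
  forall w, SG (DD A) w -> SG (DD B) w.
Proof.
move=> H; apply: SG_mono => w [x [y [hx [hy ->]]]].
by exists x, y; split; [exact: H|split; [exact: H|]].
Qed.

Lemma InF_app_l F G w : SG (InF F) w -> SG (InF (F ++ G)) w.
Proof. apply: SG_mono => u hu; by apply: List.in_or_app; left. Qed.
Lemma InF_app_r F G w : SG (InF G) w -> SG (InF (F ++ G)) w.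
Proof. apply: SG_mono => u hu; by apply: List.in_or_app; right. Qed.

Lemma inappP (T : Type) (l m : seq T) a : List.In a (l ++ m) -> List.In a l \/ List.In a m.
Proof. exact: List.in_app_or. Qed.

Lemma splus_empty (A : PVX -> Prop) : ~ (exists a, A a) -> forall w, ~ splus A w.
Proof. move=> nA w; elim=> [u hu|u v _ hu _ _] //; apply: nA; by exists u. Qed.

Lemma rational_invar (L : PVX -> Prop) : rationalK L -> Invar L.
Proof.
elim=> {L}.
- by exists [::]; split.
- move=> a _; exists [::]; split => // x y -> ->; rewrite (pv_Vmul HG); exact: SG_e.
- move=> A B _ [FA [hFA pA]] _ [FB [hFB pB]].
  case: (classic (exists a0, A a0)) => [[a0 ha0]|nA]; last first.
    exists FB; split.
      by move=> f /hFB; apply: DD_mono => w hw; right.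
    move=> x y /= [hx|hx] /= [hy|hy]; try (by case: nA; eexists; eauto).
    exact: pB.
  case: (classic (exists b0, B b0)) => [[b0 hb0]|nB]; last first.
    exists FA; split.
      by move=> f /hFA; apply: DD_mono => w hw; left.
    move=> x y /= [hx|hx] /= [hy|hy]; try (by case: nB; eexists; eauto).
    exact: pA.
  pose F := FA ++ FB ++ [:: inv a0 ** b0].
  have AB : forall x y, A x -> B y -> SG (InF F) (inv x ** y).
    move=> x y hx hy; rewrite (split_mid x y a0) (split_mid a0 y b0).
    apply: SG_mul; first by apply: InF_app_l; exact: pA.
    apply: SG_mul; last by apply: InF_app_r; apply: InF_app_l; exact: pB.
    apply: SG_base; apply: List.in_or_app; right; apply: List.in_or_app; right; by left.
  exists F; split.
    move=> f hf; have hf' : List.In f (FA ++ (FB ++ [:: inv a0 ** b0])) := hf.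
    case: (inappP hf') => [h1|h2].
      by apply: DD_mono (hFA _ h1) => w; left.
    case: (inappP h2) => [h3|[<-|[]]].
      by apply: DD_mono (hFB _ h3) => w; right.
    by apply: SG_base; exists a0, b0; split; [left|split; [right|]].
  move=> x y /= [hx|hx] /= [hy|hy].
  + by apply: InF_app_l; exact: pA.
  + exact: AB.
  + have -> : inv x ** y = inv (inv y ** x) by rewrite (pv_invM HG) (pv_invK HG).
    apply: SG_inv; exact: AB.
  + by apply: InF_app_r; apply: InF_app_l; exact: pB.
- move=> A B _ [FA [hFA pA]] _ [FB [hFB pB]].
  case: (classic ((exists a0, A a0) /\ (exists b0, B b0)));
    last first.
    move=> nAB; exists [::]; split => // x y [u [v [hu [hv _]]]].
    by case: nAB; split; eexists; eauto.
  case=> [[a0 ha0] [b0 hb0]].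
  exists (map (conj b0) FA ++ FB); split.
    move=> f hf0; have hf1 : List.In f (map (conj b0) FA ++ FB) := hf0.
    case: (inappP hf1) => [/List.in_map_iff [g [<- /hFA hg]]| /hFB hf].
    + have := SG_conj b0 hg; apply: SG_sub => w [v [[x [y [hx [hy ->]]]] ->]].
      apply: SG_base; exists (x ** b0), (y ** b0); split; first by exists x, b0.
      split; first by exists y, b0.
      by rewrite /conj (pv_invM HG) !pv_mulA.
    + apply: SG_mono hf => w [x [y [hx [hy ->]]]]; exists (a0 ** x), (a0 ** y).
      split; first by exists a0, x. split; first by exists a0, y.
      by rewrite (pv_invM HG) !pv_mulA mulVK.
  move=> w1 w2 [x1 [y1 [hx1 [hy1 ->]]]] [x2 [y2 [hx2 [hy2 ->]]]].
  have -> : inv (x1 ** y1) ** (x2 ** y2) =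
            (inv y1 ** b0) ** conj b0 (inv x1 ** x2) ** (inv b0 ** y2).
    by rewrite /conj (pv_invM HG) !pv_mulA !mulKV.
  apply: SG_mul; [apply: SG_mul|].
  + by apply: InF_app_r; exact: pB.
  + have := SG_conj b0 (pA _ _ hx1 hx2); apply: SG_sub => w [v [hv ->]].
    apply: SG_base; apply: List.in_or_app; left; exact: List.in_map.
  + by apply: InF_app_r; exact: pB.
- move=> A _ [FA [hFA pA]].
  case: (classic (exists a0, A a0)) => [[a0 ha0]|nA]; last first.
    by exists [::]; split => // x y /(splus_empty nA).
  exists (a0 :: FA); split.
    move=> f [<-|/hFA].
    + apply: SG_base; exists a0, (a0 ** a0); split; first exact: SP_base.
      split; first by apply: SP_mul; exact: SP_base.
      by rewrite (pv_cancel' HG).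
    + by apply: DD_mono => w; exact: SP_base.
  have hall : forall u, splus A u -> SG (InF (a0 :: FA)) u.
    move=> u; elim=> [x hx|u' v _ hu _ hv]; last exact: SG_mul.
    rewrite -(pv_cancel HG a0 x); apply: SG_mul; first by apply: SG_base; left.
    by apply: SG_mono (pA _ _ ha0 hx) => w hw; right.
  move=> x y hx hy; apply: SG_mul; [apply: SG_inv|]; exact: hall.
- move=> A B _ [F [hF pF]] hAB; exists F; split.
  + by move=> f /hF; apply: DD_mono => w /hAB.
  + move=> x y /hAB hx /hAB hy; exact: pF.
Qed.

Lemma nth_in (F : seq PVX) a0 i : i < size F -> List.In (nth a0 F i) F.
Proof.
elim: F i => [|a F IH] [|i] //= hi; [by left|right; exact: IH].
Qed.

Lemma in_nth (F : seq PVX) a0 f : List.In f F -> exists i : 'I_(size F), f = nth a0 F i.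
Proof.
elim: F => [|a F IH] //= [->|/IH [i ->]]; first by exists ord0.
by exists (lift ord0 i).
Qed.

Hypothesis HL : forall k (F : 'I_k -> PVX), (forall i, OmegaS kappa (F i)) ->
  forall w, clos kappa (fg_subgroup F) w -> fg_subgroup F w.

Lemma clos_genS (L : PVX -> Prop) : rationalK L ->
  forall w, clos kappa (splus L) w -> genS kappa L w.
Proof.
move=> rL w [ow cw].
case: (classic (exists a0, L a0)) => [[a0 ha0]|nL]; last first.
  have p0 : 'I_0 -> VPt V X by move=> [m hm]; move: hm; rewrite ltn0.
  by case: (cw 0 p0) => a [sa _]; case: (splus_empty nL sa).
have oL := rational_omega rL.
case: (rational_invar rL) => FL [hF pF].
have oe : OmegaS kappa e.
  rewrite -(pv_Vmul HG a0).
  have h1 := @kclosed_inv V X _ (@kclosed_Omega V X) _ (oL _ ha0).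
  exact: (@kclosed_mul V X _ (@kclosed_Omega V X) _ _ h1 (oL _ ha0)).
have ge : genS kappa L e.
  rewrite -(pv_Vmul HG a0).
  have h1 := @kclosed_inv V X _ (@kclosed_genS V X L) _ (GS_base kappa ha0).
  exact: (@kclosed_mul V X _ (@kclosed_genS V X L) _ _ h1 (GS_base kappa ha0)).
have oSG : forall u, SG (DD L) u -> OmegaS kappa u.
  have HH : forall z, DD L z -> OmegaS kappa z.
    move=> u [x [y [hx [hy ->]]]].
    have h1 := @kclosed_inv V X _ (@kclosed_Omega V X) _ (oL _ hx).
    exact: (@kclosed_mul V X _ (@kclosed_Omega V X) _ _ h1 (oL _ hy)).
  move=> u0; exact: (@SG_in (DD L) _ (@kclosed_Omega V X) oe HH u0).
have gSG : forall u, SG (DD L) u -> genS kappa L u.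
  have HH : forall z, DD L z -> genS kappa L z.
    move=> u [x [y [hx [hy ->]]]].
    have h1 := @kclosed_inv V X _ (@kclosed_genS V X L) _ (GS_base kappa hx).
    exact: (@kclosed_mul V X _ (@kclosed_genS V X L) _ _ h1 (GS_base kappa hy)).
  move=> u0; exact: (@SG_in (DD L) _ (@kclosed_genS V X L) ge HH u0).
pose Fs := a0 :: FL.
pose Fi := fun i : 'I_(size Fs) => nth a0 Fs i.
have inFs : forall f, List.In f Fs -> OmegaS kappa f /\ genS kappa L f.
  move=> f [<-|/hF hf]; split.
  - exact: oL.
  - exact: GS_base.
  - exact: oSG.
  - exact: gSG.
have oF : forall i, OmegaS kappa (Fi i).
  by move=> i; exact: (proj1 (inFs _ (nth_in a0 (ltn_ord i)))).
have sub : forall u, splus L u -> fg_subgroup Fi u.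
  have H : forall u, SG (InF Fs) u -> fg_subgroup Fi u.
    have e1 : fg_subgroup Fi e.
      by apply: GS_base; right; split; [exact: oe| rewrite (pv_mul1 HG)].
    have HH : forall f, InF Fs f -> fg_subgroup Fi f.
      move=> f hf; apply: GS_base; left; case: (in_nth a0 hf) => i ->; by exists i.
    move=> u0; exact: (@SG_in (InF Fs) _ (@kclosed_genS V X _) e1 HH u0).
  move=> u; elim=> [x hx|u1 v1 _ hu _ hv].
    apply: H; rewrite -(pv_cancel HG a0 x); apply: SG_mul; first by apply: SG_base; left.
    by apply: SG_mono (pF _ _ ha0 hx) => z hz; right.
  exact: (@kclosed_mul V X _ (@kclosed_genS V X _) _ _ hu hv).
have hw : fg_subgroup Fi w.
  apply: (HL oF); split => // k p; case: (cw k p) => a [sa [oa ea]].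
  by exists a; split => //; exact: sub.
move: hw; rewrite /fg_subgroup; apply: genS_sub => u [[i ->]|[ou /(pv_idem HG) ->]].
- exact: (proj2 (inFs _ (nth_in a0 (ltn_ord i)))).
- exact: ge.
Qed.

End Main3.

Lemma genS_sub_gen V X sigma (P Q : PV V X -> Prop) :
  (forall w, P w -> genS sigma Q w) -> forall w, genS sigma P w -> genS sigma Q w.
Proof.
move=> H w; elim=> [u hu|n o u ko _ IH]; first exact: H.
exact: GS_op.
Qed.

Theorem lemma4p5 (sigma : forall n, IOp n -> Prop) (V : FinSg -> Prop)
    (X : finType) :
  pseudovariety V -> implicit_signature sigma ->
  (forall L : PV V X -> Prop, (forall w, L w -> OmegaS sigma w) ->
     set_eq (clos sigma (splus L)) (genS sigma L) ->
     set_eq (clos sigma (splus L)) (genS sigma (clos sigma L))) /\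
  (group_pseudovariety V -> LERF V ->
   forall L : PV V X -> Prop, rationalK L ->
     set_eq (clos kappa (splus L)) (genS kappa L)).
Proof.
move=> _ _; split.
- move=> L hL hEq w; split.
  + move/hEq; apply: genS_sub_gen => u hu; apply: GS_base; split; first exact: hL.
    by move=> k p; exists u; split => //; split => //; exact: hL.
  + move=> hw; apply/hEq; move: hw; apply: genS_sub_gen => u [ou cu].
    apply/hEq; split => // k p; case: (cu k p) => a [la [oa ea]].
    by exists a; split => //; exact: SP_base.
- move=> [_ HG] HL L rL w; split.
  + exact: (clos_genS HG (HL X)).
  + apply: genS_clos; exact: rational_omega.
Qed.
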